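(* Let $\mathbb{G}$ be a Hausdorff topological group, and suppose that either (i) the action $\mathbb{G}\times\mathcal{C}\mathbb{G}\to\mathcal{C}\mathbb{G}$, $(h,[g,t])\mapsto[hg,t]$, on the quotient-topologized cone is discontinuous, or (ii) on $\mathbb{G}\times\mathcal{C}\mathbb{G}$ the quotient topology induced by $\mathbb{G}\times\mathbb{G}\times[0,1]\to\mathbb{G}\times\mathcal{C}\mathbb{G}$ differs from the product topology. Then the diagonal right translation action of $\mathbb{G}$ on the quotient-topologized join $\mathbb{G}*\mathbb{G}$ is discontinuous, and hence so is the diagonal right translation action of $\mathbb{G}$ on $E_n\mathbb{G}$ for every $1\le n\le\infty$.
   Context: The join $X*Y:=X\times Y\times[0,1]/\sim$ with $(x,y,0)\sim(x,y',0)$, $(x,y,1)\sim(x',y,1)$, points written $tx+(1-t)y$; more generally $E_n\mathbb{G}:=\mathbb{G}^{*(n+1)}$ is the set of formal convex combinations $\sum_{i=0}^n t_ig_i$ ($t_i\ge0$, $\sum t_i=1$, with $g_i$ irrelevant when $t_i=0$), topologized as a quotient of $\mathbb{G}^{n+1}\times\Delta^n$ ($\Delta^n$ the $n$-simplex), and $E_\infty\mathbb{G}=E\mathbb{G}:=\bigcup_n E_n\mathbb{G}$ carries the colimit topology. The cone is $\mathcal{C}\mathbb{G}:=\mathbb{G}\times[0,1]/(\mathbb{G}\times\{0\})$ with the quotient topology. $\mathbb{G}$ acts on $E_n\mathbb{G}$ on the right diagonally: $(\sum t_ig_i)g=\sum t_i(g_ig)$; continuity refers to the map $E_n\mathbb{G}\times\mathbb{G}\to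 E_n\mathbb{G}$ with the product topology on the domain. *)

(* Defs.v *)
From HB Require Import structures.
From mathcomp Require Import all_boot all_order all_algebra.
From mathcomp Require Import all_classical all_reals.
From mathcomp Require Import topology_structure product_topology subtype_topology
  sigT_topology quotient_topology function_spaces separation_axioms num_topology.
From mathcomp Require Import generic_quotient.

Set Implicit Arguments.
Unset Strict Implicit.
Unset Printing Implicit Defensive.
Import Order.TTheory GRing.Theory Num.Theory.
Import numFieldTopology.Exports.
Local Open Scope classical_set_scope.
Local Open Scope ring_scope.
Local Open Scope quotient_scope.

Definition topological_group (T : topologicalType) (mul : T -> T -> T)
    (inv : T -> T) (e : T) : Prop :=
  [/\ associative mul, left_id e mul, left_inverse e inv mul,
      continuous (fun p : T * T => mul p.1 p.2) & continuous inv].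

(** * Quotients by the kernel of a "code" map.
    Every identification below is of the form "p ~ q iff code p = code q",
    where code p records exactly the data that the point determines. *)
Definition ker_rel (P : Type) (Z : Type) (f : P -> Z) : rel P :=
  fun p q => `[< f p = f q >].

Lemma ker_rel_refl (P Z : Type) (f : P -> Z) : reflexive (ker_rel f).
Proof. by move=> p; apply/asboolP. Qed.
Lemma ker_rel_sym (P Z : Type) (f : P -> Z) : symmetric (ker_rel f).
Proof.
move=> p q; rewrite /ker_rel; apply/asboolP/asboolP => H; by rewrite H.
Qed.
Lemma ker_rel_trans (P Z : Type) (f : P -> Z) : transitive (ker_rel f).
Proof. by move=> q p r /asboolP H1 /asboolP H2; apply/asboolP; rewrite H1. Qed.

Definition ker_equiv (P : choiceType) (Z : Type) (f : P -> Z) : equiv_rel P :=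
  EquivRel (ker_rel f) (@ker_rel_refl P Z f) (@ker_rel_sym P Z f)
    (@ker_rel_trans P Z f).

Definition qspace (P : topologicalType) (Z : Type) (f : P -> Z) :=
  quotient_topology {eq_quot (ker_equiv f)}.

Definition unit_itv (R : realType) : set R := [set x | 0 <= x <= 1].
Notation I01 R := (set_type (@unit_itv R)).

(** * The cone  CG = G x [0,1] / (G x {0}) *)
Notation cone_pres R T := (T * I01 R)%type.
Definition cone_code (R : realType) (T : topologicalType) (p : cone_pres R T)
  : R * option T :=
  (\val p.2, if \val p.2 == 0 then None else Some p.1).
Definition cone (R : realType) (T : topologicalType) := qspace (@cone_code R T).

Definition cone_act (R : realType) (T : topologicalType) (mul : T -> T -> T)
  (p : T * cone R T) : cone R T :=
  let r := repr p.2 in \pi_(cone R T) (mul p.1 r.1, r.2).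

Definition GxCone_map (R : realType) (T : topologicalType)
  (q : T * cone_pres R T) : T * cone R T := (q.1, \pi_(cone R T) q.2).

(** * The join  G*G = G x G x [0,1] / ~ with
      (x,y,0) ~ (x,y',0) and (x,y,1) ~ (x',y,1)  *)
Notation join_pres R T := (T * T * I01 R)%type.
Definition join_code (R : realType) (T : topologicalType) (p : join_pres R T)
  : R * option T * option T :=
  (\val p.2, if \val p.2 == 1 then None else Some p.1.1,
             if \val p.2 == 0 then None else Some p.1.2).
Definition join (R : realType) (T : topologicalType) := qspace (@join_code R T).

Definition join_act (R : realType) (T : topologicalType) (mul : T -> T -> T)
  (p : join R T * T) : join R T :=
  let r := repr p.1 in \pi_(join R T) (mul r.1.1 p.2, mul r.1.2 p.2, r.2).

(** * E_n G = G^{*(n+1)} : quotient of G^{n+1} x Delta^n *)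
Definition simplex (R : realType) (n : nat) : set {ptws 'I_n.+1 -> R} :=
  [set t | (forall i, 0 <= t i) /\ \sum_(i < n.+1) t i = 1].

Notation En_pres R T n :=
  ({ptws 'I_n.+1 -> T} * set_type (@simplex R n))%type.

(** the formal convex combination  sum_i t_i g_i  represented by a point:
    weights extended by 0 to all indices, and g_i recorded only when t_i > 0 *)
Definition En_code (R : realType) (T : topologicalType) (n : nat)
  (p : En_pres R T n) : (nat -> R) * (nat -> option T) :=
  (fun k : nat => if (k < n.+1)%N then (\val p.2 : {ptws 'I_n.+1 -> R}) (inord k) else 0,
   fun k : nat => if (k < n.+1)%N && (0 < (\val p.2 : {ptws 'I_n.+1 -> R}) (inord k))
            then Some (p.1 (inord k)) else None).

Definition En (R : realType) (T : topologicalType) (n : nat) :=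
  qspace (@En_code R T n).

Definition En_pres_act (R : realType) (T : topologicalType) (mul : T -> T -> T)
  (n : nat) (p : En_pres R T n) (g : T) : En_pres R T n :=
  ((fun i => mul (p.1 i) g) : {ptws 'I_n.+1 -> T}, p.2).

Definition En_act (R : realType) (T : topologicalType) (mul : T -> T -> T)
  (n : nat) (p : En R T n * T) : En R T n :=
  \pi_(En R T n) (En_pres_act mul (repr p.1) p.2).

(** * E_infty G = union of the E_n G with the colimit topology, realised as the
    quotient of the topological disjoint union of the presentation spaces
    G^{n+1} x Delta^n by "same formal convex combination". *)
Definition En_pres_fam (R : realType) (T : topologicalType) :
  nat -> topologicalType := fun n => (En_pres R T n : topologicalType).

Notation Einf_pres R T := {n : nat & En_pres_fam R T n}.

Definition Einf_code (R : realType) (T : topologicalType) (s : Einf_pres R T) :=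
  @En_code R T (projT1 s) (projT2 s).

Definition Einf (R : realType) (T : topologicalType) := qspace (@Einf_code R T).

Definition Einf_act (R : realType) (T : topologicalType) (mul : T -> T -> T)
  (p : Einf R T * T) : Einf R T :=
  let r := repr p.1 in
  \pi_(Einf R T) (existT (En_pres_fam R T) (projT1 r)
                    (En_pres_act mul (projT2 r) p.2)).

(* Main.v *)
Require Import Defs.
From HB Require Import structures.
From mathcomp Require Import all_boot all_order all_algebra.
From mathcomp Require Import all_classical all_reals.
From mathcomp Require Import topology_structure product_topology subtype_topology
  sigT_topology quotient_topology function_spaces separation_axioms num_topology.
From mathcomp Require Import generic_quotient initial_topology supremum_topology order_topology normedtype.
Import Order.TTheory GRing.Theory Num.Theory.
Import numFieldTopology.Exports.
Local Open Scope classical_set_scope.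
Local Open Scope ring_scope.
Local Open Scope quotient_scope.
Set Implicit Arguments.
Unset Strict Implicit.

Lemma pair_cont {X Y Z : topologicalType} (f : X -> Y) (g : X -> Z) :
  continuous f -> continuous g -> continuous (fun x => (f x, g x)).
Proof. by move=> cf cg x; apply: cvg_pair; [exact: cf|exact: cg]. Qed.

Lemma fst_cont {X Y : topologicalType} : continuous (@fst X Y).
Proof. by move=> x; exact: cvg_fst. Qed.
Lemma snd_cont {X Y : topologicalType} : continuous (@snd X Y).
Proof. by move=> x; exact: cvg_snd. Qed.

Lemma comp_cont {X Y Z : topologicalType} (f : X -> Y) (g : Y -> Z) :
  continuous f -> continuous g -> continuous (fun x => g (f x)).
Proof. by move=> cf cg x; apply: continuous_comp; [exact: cf|exact: cg]. Qed.

Lemma ptws_cont {X V : topologicalType} {I : eqType} (f : X -> {ptws I -> V}) :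
  (forall i, continuous (fun x => f x i)) -> continuous f.
Proof.
move=> cf x; apply/cvg_sup => i.
have := @continuous_comp_initial _ X V (fun g : I -> V => g i) f (cf i).
by move=> /(_ x).
Qed.

Lemma eval_cont (V : topologicalType) (I : eqType) (i : I) :
  continuous (fun f : {ptws I -> V} => f i).
Proof. exact: (@proj_continuous I (fun _ => V) i). Qed.

Lemma val_cont {X : topologicalType} {A : set X} : continuous (fun x : set_type A => \val x).
Proof. exact: initial_continuous. Qed.

Lemma into_sub_cont {X Y : topologicalType} {A : set Y} (f : X -> set_type A) :
  continuous (fun x => \val (f x)) -> continuous f.
Proof. move=> cf. exact: (@continuous_comp_initial _ X Y (fun x : set_type A => \val x) f cf). Qed.

Section Clip.
Variable R : realType.
Definition clipr (r : R) : R := Num.min (Num.max r 0) 1.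
Lemma clipr_in r : clipr r \in unit_itv (R:=R).
Proof.
apply/mem_set; rewrite /unit_itv /clipr /=.
by rewrite le_min ge_min lexx orbT andbT le_max lexx orbT ler01.
Qed.
Definition clip (r : R) : I01 R := exist _ (clipr r) (clipr_in r).
Lemma clipE r : \val (clip r) = clipr r. Proof. by []. Qed.
Lemma clipr_id r : 0 <= r <= 1 -> clipr r = r.
Proof. by case/andP=> h0 h1; rewrite /clipr (max_l h0) (min_l h1). Qed.
Lemma clipr_cont : continuous clipr.
Proof.
have h1 : continuous (fun r : R => Num.max r 0).
  exact: (@max_fun_continuous _ R R id (fun _ => 0) (fun x => cvg_id) (fun x => cvg_cst _)).
exact: (@min_fun_continuous _ R R (fun r => Num.max r 0) (fun _ => 1) h1 (fun x => cvg_cst _)).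
Qed.
Lemma clip_cont : continuous clip.
Proof. apply: into_sub_cont. exact: clipr_cont. Qed.
End Clip.

Section Q.
Context (P : topologicalType) (Z : Type) (f : P -> Z).
Lemma qpiP x y : \pi_(qspace f) x = \pi_(qspace f) y <-> f x = f y.
Proof.
split.
- move=> H. have : x == y %[mod {eq_quot ker_equiv f}] by apply/eqP; exact: H.
  by rewrite eqmodE => /asboolP.
- move=> H. have : x == y %[mod {eq_quot ker_equiv f}] by rewrite eqmodE; apply/asboolP.
  by move/eqP.
Qed.
Lemma qrepr x : f (repr (\pi_(qspace f) x)) = f x.
Proof. by apply/qpiP; rewrite reprK. Qed.

Lemma qopen (S : Z -> Prop) : open [set p | S (f p)] ->
  open [set x : qspace f | S (f (repr x))].
Proof.
move=> oS; rewrite /open /= /quotient_open.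
have -> : \pi_(qspace f) @^-1` [set x : qspace f | S (f (repr x))] = [set p | S (f p)].
  by apply/seteqP; split => p /=; rewrite qrepr.
exact: oS.
Qed.
End Q.

Lemma open_from_map (X : topologicalType) (P : topologicalType) (Z : Type)
  (f : P -> Z) (Phi : X -> qspace f) (S : Z -> Prop) (U : set X) :
  continuous Phi -> open [set p | S (f p)] ->
  (forall x, S (f (repr (Phi x))) <-> U x) -> open U.
Proof.
move=> cP oS HU.
have -> : U = Phi @^-1` [set x : qspace f | S (f (repr x))].
  by apply/seteqP; split => x /=; rewrite HU.
by move/continuousP: cP; apply; exact: qopen.
Qed.

Section Main.
Variables (R : realType) (T : topologicalType) (mul : T -> T -> T) (inv : T -> T) (e : T).
Hypothesis hG : topological_group mul inv e.

Let mulA : associative mul. Proof. by case: hG. Qed.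
Let mul1 : left_id e mul. Proof. by case: hG. Qed.
Let mulV : left_inverse e inv mul. Proof. by case: hG. Qed.
Let hmul : continuous (fun p : T * T => mul p.1 p.2). Proof. by case: hG. Qed.
Let hinv : continuous inv. Proof. by case: hG. Qed.

Lemma mulrV x : mul x (inv x) = e.
Proof.
rewrite -[LHS]mul1 -{1}(mulV (inv x)) -mulA (mulA (inv x) x) mulV mul1.
exact: mulV.
Qed.
Lemma mulr1 x : mul x e = x.
Proof. by rewrite -(mulV x) mulA mulrV mul1. Qed.
Lemma mulKr g h : mul (mul g h) (inv h) = g.
Proof. by rewrite -mulA mulrV mulr1. Qed.

Lemma mul_cont2 (X : topologicalType) (f g : X -> T) :
  continuous f -> continuous g -> continuous (fun x => mul (f x) (g x)).
Proof. by move=> cf cg; exact: (comp_cont (pair_cont cf cg) hmul). Qed.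

Local Notation cpi := (\pi_(cone R T)).

Lemma cone_apex g g' (t : I01 R) : \val t = 0 -> cpi (g,t) = cpi (g',t).
Proof. by move=> h; apply/qpiP; rewrite /cone_code /= h eqxx. Qed.

Lemma cone_code_act h (q : cone_pres R T) :
  cone_code (mul h q.1, q.2) = ((cone_code q).1, omap (mul h) (cone_code q).2).
Proof. by rewrite /cone_code /=; case: ifP. Qed.

Lemma cone_act_pi h p : @cone_act R T mul (h, cpi p) = cpi (mul h p.1, p.2).
Proof. by apply/qpiP; rewrite /cone_act /= !cone_code_act qrepr. Qed.

Lemma GxCone_cont : continuous (@GxCone_map R T).
Proof.
apply: pair_cont; first exact: fst_cont.
exact: (comp_cont snd_cont pi_continuous).
Qed.

Lemma quot_cone_act :
  (forall U, open (@GxCone_map R T @^-1` U) -> open U) -> continuous (@cone_act R T mul).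
Proof.
move=> HQ; apply/continuousP => V oV; apply: HQ.
have -> : @GxCone_map R T @^-1` (@cone_act R T mul @^-1` V) =
    (fun q : T * cone_pres R T => cpi (mul q.1 q.2.1, q.2.2)) @^-1` V.
  by apply/seteqP; split => q /=; rewrite /GxCone_map cone_act_pi.
suff hc : continuous (fun q : T * cone_pres R T => cpi (mul q.1 q.2.1, q.2.2)).
  by move/continuousP: hc; apply.
apply: (comp_cont _ pi_continuous); apply: pair_cont.
  exact: (mul_cont2 fst_cont (comp_cont snd_cont fst_cont)).
exact: (comp_cont snd_cont snd_cont).
Qed.

Local Notation jpi := (\pi_(Defs.join R T)).

Definition half (t : I01 R) : I01 R := clip (\val t / 2).

Lemma I01P (t : I01 R) : 0 <= \val t <= 1.
Proof. by have := set_valP t. Qed.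

Lemma half_val t : \val (half t) = \val t / 2.
Proof.
rewrite /half clipE clipr_id //; have /andP[h0 h1] := I01P t.
rewrite divr_ge0 //= ler_pdivrMr // mul1r; apply: (le_trans h1); by rewrite ler1n.
Qed.

Lemma half_lt1 (t : I01 R) : \val t / 2 < 1.
Proof.
have /andP[h0 h1] := I01P t.
by rewrite ltr_pdivrMr // mul1r; apply: (le_lt_trans h1); rewrite ltr1n.
Qed.

Lemma half_eq0 (r : R) : (r / 2 == 0) = (r == 0).
Proof. by rewrite mulf_eq0 invr_eq0 pnatr_eq0 orbF. Qed.

Lemma clip_dbl_half (t : I01 R) : clip (2 * (\val t / 2)) = t.
Proof.
apply: val_inj => /=; rewrite clipr_id mulrC divfK ?pnatr_eq0 //; exact: I01P.
Qed.

Lemma clip0 : \val (clip 0) = 0 :> R.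
Proof. by rewrite clipE clipr_id // lexx ler01. Qed.

Lemma half_cont : continuous half.
Proof.
change (continuous (fun t : I01 R => clip (\val t / 2))).
have h1 := (comp_cont (@val_cont _ (@unit_itv R)) (@mulrr_continuous R (2^-1))).
have h2 := @clip_cont R. have h3 := comp_cont h1 h2. exact: h3.
Qed.

Definition iotaJp (q : cone_pres R T) : join_pres R T := ((e, q.1), half q.2).

Lemma iotaJp_cont : continuous iotaJp.
Proof.
apply: pair_cont; last exact: (comp_cont snd_cont half_cont).
apply: pair_cont; [exact: cst_continuous | exact: fst_cont].
Qed.

Lemma join_code_iota p q : cone_code p = cone_code q ->
  join_code (iotaJp p) = join_code (iotaJp q).
Proof.
case: p q => [g [t Ht]] [g' [t' Ht']]; rewrite /cone_code /join_code /iotaJp; cbn [fst snd].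
rewrite !half_val /= => -[ht hg]; subst t'; rewrite !half_eq0; move: hg.
by case: eqP => //= _ [->].
Qed.

Definition iotaJ (c : cone R T) : Defs.join R T := jpi (iotaJp (repr c)).

Lemma iotaJ_cont : continuous iotaJ.
Proof.
have := @repr_comp_continuous _ _ _ (fun p => jpi (iotaJp p))
  (comp_cont iotaJp_cont pi_continuous).
apply => a b /eqP /qpiP H; apply/eqP/qpiP; exact: join_code_iota.
Qed.

Definition join_code_act (h : T) (c : R * option T * option T) :=
  (c.1.1, omap (mul^~ h) c.1.2, omap (mul^~ h) c.2).

Lemma join_code_actE h (q : join_pres R T) :
  join_code ((mul q.1.1 h, mul q.1.2 h), q.2) = join_code_act h (join_code q).
Proof. by rewrite /join_code /join_code_act /=; case: ifP; case: ifP. Qed.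

Definition PJ (U : set (T * cone R T)) (c : R * option T * option T) : Prop :=
  c.1.1 < 1 /\
  match c.1.2 with
  | Some x => U (x, cpi (match c.2 with Some y => mul y (inv x) | None => e end,
                         clip (2 * c.1.1)))
  | None => False end.

Lemma PJ_open U : open (@GxCone_map R T @^-1` U) ->
  open [set q | PJ U (join_code q)].
Proof.
move=> oU.
have -> : [set q | PJ U (join_code q)] =
  [set q : join_pres R T | \val q.2 < 1] `&`
  (fun q : join_pres R T => (q.1.1, (mul q.1.2 (inv q.1.1), clip (2 * \val q.2))))
    @^-1` (@GxCone_map R T @^-1` U).
  apply/seteqP; split => -[[x y] [t Ht]]; rewrite /PJ /join_code /GxCone_map /=.
    move=> [ht]; rewrite (lt_eqF ht) /=; case: eqP => [h0|_] //= HU; split => //.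
    by subst t; rewrite (@cone_apex (mul y (inv x)) e) // mulr0 clip0.
  move=> [ht]; rewrite (lt_eqF ht) /=; case: eqP => [h0|_] //= HU; split => //.
  by subst t; rewrite (@cone_apex e (mul y (inv x))) // mulr0 clip0.
apply: openI.
  suff hc : continuous (fun q : join_pres R T => \val q.2).
    by have := (continuousP _).1 hc _ (@open_lt R 1).
  exact: (comp_cont snd_cont val_cont).
suff hc : continuous
   (fun q : join_pres R T => (q.1.1, (mul q.1.2 (inv q.1.1), clip (2 * \val q.2)))).
  by move/continuousP: hc; apply.
apply: pair_cont; first exact: (comp_cont fst_cont fst_cont).
apply: pair_cont.
  apply: mul_cont2; first exact: (comp_cont fst_cont snd_cont).
  exact: (comp_cont (comp_cont fst_cont fst_cont) hinv).
have h1 := comp_cont (comp_cont (@snd_cont (T * T)%type _) (@val_cont _ (@unit_itv R)))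
  (@mulrl_continuous R 2).
exact: (comp_cont h1 (@clip_cont R)).
Qed.

Lemma join_quot : continuous (@join_act R T mul) ->
  forall U, open (@GxCone_map R T @^-1` U) -> open U.
Proof.
move=> cJ U oU.
apply: (@open_from_map _ _ _ (@join_code R T)
   (fun p : T * cone R T => @join_act R T mul (iotaJ p.2, p.1)) (PJ U)).
- have hh := (comp_cont (pair_cont (comp_cont (@snd_cont T (cone R T)) iotaJ_cont)
     (@fst_cont T (cone R T))) cJ). exact hh.
- exact: PJ_open.
case=> h c /=.
rewrite /join_act qrepr /= join_code_actE /iotaJ qrepr.
case E: (repr c) => [g t].
have <- : cpi (g, t) = c by rewrite -E reprK.
rewrite /iotaJp /join_code /join_code_act /PJ; cbn [fst snd]. rewrite half_val.
rewrite (lt_eqF (half_lt1 t)) /= half_eq0 mul1 clip_dbl_half.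
have ht := half_lt1 t.
case: eqP => [h0|_] /=.
  by rewrite (@cone_apex e g) //; split => [[]|].
by rewrite mulKr; split => [[]|].
Qed.

Definition PS (U : set (T * cone R T)) (c : (nat -> R) * (nat -> option T)) : Prop :=
  0 < c.1 0%N /\
  match c.2 0%N with
  | Some x => U (x, cpi (match c.2 1%N with Some y => mul y (inv x) | None => e end,
                         clip (2 * c.1 1%N)))
  | None => False end.

Lemma clip_le0 (r : R) : r <= 0 -> \val (clip r) = 0.
Proof. by move=> h; rewrite clipE /clipr (max_r h) (min_l ler01). Qed.

Definition wt n (p : En_pres R T n) (i : 'I_n.+1) : R :=
  (\val p.2 : {ptws 'I_n.+1 -> R}) i.

Lemma wt_cont n i : continuous (fun p : En_pres R T n => wt p i).
Proof.
exact: (comp_cont (comp_cont (@snd_cont _ _) val_cont) (@eval_cont R _ i)).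
Qed.

Lemma gs_cont n i : continuous (fun p : En_pres R T n => p.1 i).
Proof. exact: (comp_cont (@fst_cont _ _) (@eval_cont T _ i)). Qed.

Lemma PS_open n U : open (@GxCone_map R T @^-1` U) ->
  open [set p : En_pres R T n | PS U (En_code p)].
Proof.
move=> oU.
have o1 : open [set p : En_pres R T n | 0 < wt p (inord 0)].
  by have := (continuousP _).1 (@wt_cont n (inord 0)) _ (@open_gt R 0).
case: n o1 => [|m] o1.
  have -> : [set p : En_pres R T 0 | PS U (En_code p)] =
     [set p | 0 < wt p (inord 0)] `&`
     (fun p : En_pres R T 0 => (p.1 (inord 0), (e, clip (2 * 0))))
       @^-1` (@GxCone_map R T @^-1` U).
    apply/seteqP; split => p; rewrite /PS /En_code /= /GxCone_map /wt /=.
      by case=> h; rewrite h => HU.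
    by case=> h HU; rewrite h.
  apply: openI => //.
  suff hc : continuous (fun p : En_pres R T 0 => (p.1 (inord 0), (e, clip (2 * 0 : R)))).
    by move/continuousP: hc; apply.
  apply: pair_cont; first exact: (@gs_cont _ (inord 0)).
  exact: cst_continuous.
have -> : [set p : En_pres R T m.+1 | PS U (En_code p)] =
   [set p | 0 < wt p (inord 0)] `&`
   (fun p : En_pres R T m.+1 => (p.1 (inord 0),
       (mul (p.1 (inord 1)) (inv (p.1 (inord 0))), clip (2 * wt p (inord 1)))))
     @^-1` (@GxCone_map R T @^-1` U).
  apply/seteqP; split => p; rewrite /PS /En_code /= /GxCone_map /wt /=.
    move=> [h]; rewrite h; case: ifP => h1 HU; split => //.
    by rewrite (@cone_apex _ e) // clip_le0 // pmulr_rle0 // leNgt h1.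
  case=> h; rewrite h; case: ifP => // h1 HU.
  by rewrite (@cone_apex _ (mul (p.1 (inord 1)) (inv (p.1 (inord 0))))) // clip_le0 // pmulr_rle0 // leNgt h1.
apply: openI => //.
suff hc : continuous (fun p : En_pres R T m.+1 => (p.1 (inord 0),
       (mul (p.1 (inord 1)) (inv (p.1 (inord 0))), clip (2 * wt p (inord 1))))).
  by move/continuousP: hc; apply.
apply: pair_cont; first exact: (@gs_cont _ (inord 0)).
apply: pair_cont; first exact: (mul_cont2 (@gs_cont m.+1 (inord 1)) (comp_cont (@gs_cont m.+1 (inord 0)) hinv)).
have h1 := comp_cont (@wt_cont m.+1 (inord 1)) (@mulrl_continuous R 2).
exact: (comp_cont h1 (@clip_cont R)).
Qed.
Unset Implicit Arguments.

Definition gsf m (g : T) : {ptws 'I_m.+2 -> T} :=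
  fun j => if (nat_of_ord j == 1)%N then g else e.
Definition wfun m (t : I01 R) : {ptws 'I_m.+2 -> R} :=
  fun j => if (nat_of_ord j == 0)%N then 1 - \val t / 2
           else if (nat_of_ord j == 1)%N then \val t / 2 else 0.

Lemma wfun_simplex m t : wfun m t \in @simplex R m.+1.
Proof.
have /andP[h0 h1] := I01P t.
have ht2 : \val t / 2 <= 1 by apply: ltW; exact: half_lt1.
apply/mem_set; split.
  move=> i; rewrite /wfun; case: ifP => _; first by rewrite subr_ge0.
  by case: ifP => _ //; rewrite divr_ge0.
rewrite 2!big_ord_recl big1 /=; last first.
  by move=> i _; rewrite /wfun /=.
by rewrite /wfun /= addr0 subrK.
Qed.

Definition iotaEp m (q : cone_pres R T) : En_pres R T m.+1 :=
  (gsf m q.1, exist _ (wfun m q.2) (wfun_simplex m q.2)).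

Lemma gsf_cont m : continuous (gsf m).
Proof.
apply: ptws_cont => j; rewrite /gsf.
by case: eqP => _ /=; [move=> x; exact: cvg_id|exact: cst_continuous].
Qed.

Lemma wsub_cont m : continuous (fun t : I01 R =>
  (exist _ (wfun m t) (wfun_simplex m t) : set_type (@simplex R m.+1))).
Proof.
apply: into_sub_cont => /=.
apply: ptws_cont => j; rewrite /wfun.
have hh : continuous (fun t : I01 R => \val t / 2).
  exact: (comp_cont (@val_cont _ (@unit_itv R)) (@mulrr_continuous R (2^-1))).
case: eqP => _ /=.
  have hc : continuous (fun _ : I01 R => (1:R)) by exact: cst_continuous.
  move=> t; exact: (@continuousB R R^o (I01 R) (fun _ => 1) (fun t : I01 R => \val t / 2) t (hc t) (hh t)).
by case: eqP => _ //=; exact: cst_continuous.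
Qed.

Lemma iotaEp_cont m : continuous (iotaEp m).
Proof.
apply: pair_cont.
  exact: (comp_cont (@fst_cont _ _) (gsf_cont m)).
exact: (comp_cont (@snd_cont _ _) (wsub_cont m)).
Qed.

Lemma En_code_act n h (p : En_pres R T n) :
  En_code (En_pres_act mul p h) =
  ((En_code p).1, fun k => omap (mul^~ h) ((En_code p).2 k)).
Proof.
rewrite /En_code /En_pres_act /=; congr pair; apply: funext => k; by case: ifP.
Qed.

Lemma En_code_iota m p q : cone_code p = cone_code q ->
  En_code (iotaEp m p) = En_code (iotaEp m q).
Proof.
case: p q => [g t] [g' t']; rewrite /cone_code /= => -[/val_inj ht hg]; subst t'.
rewrite /En_code /iotaEp /=; congr pair; apply: funext => k.
case: ifP => //= /andP[hk hw]; rewrite /gsf; case: eqP => // h1.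
move: hw; rewrite /wfun h1 /= => hw.
have : \val t != 0 by rewrite -half_eq0 gt_eqF.
by move: hg; case: eqP => // _ [->].
Qed.

Lemma PS_iota m U h g t :
  PS U ((En_code (iotaEp m (g,t))).1,
        fun k => omap (mul^~ h) ((En_code (iotaEp m (g,t))).2 k)) <->
  U (h, cpi (g,t)).
Proof.
have i0 : nat_of_ord (inord 0 : 'I_m.+2) = 0%N by rewrite inordK.
have i1 : nat_of_ord (inord 1 : 'I_m.+2) = 1%N by rewrite inordK.
case: t => t Ht.
have ht : t / 2 < 1 := half_lt1 (exist _ t Ht).
have ht0 : 0 < 1 - t / 2 by rewrite subr_gt0.
have hc := clip_dbl_half (exist _ t Ht); rewrite /= in hc.
rewrite /PS /En_code /iotaEp /= /wfun /gsf i0 i1 /= ht0 /= mul1 hc.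
case: ifP => h2 /=; first by rewrite mulKr; split => [[]|].
have t0 : t = 0.
  have /andP[h0 _] := I01P (exist _ t Ht); rewrite /= in h0.
  apply/le_anti; rewrite h0 andbT.
  by move: h2; rewrite pmulr_lgt0 ?invr_gt0 // => /negbT; rewrite -leNgt.
by rewrite (@cone_apex e g) //=; split => [[]|].
Qed.

Definition iotaE m (c : cone R T) : En R T m.+1 :=
  \pi_(En R T m.+1) (iotaEp m (repr c)).

Lemma iotaE_cont m : continuous (iotaE m).
Proof.
have := @repr_comp_continuous _ _ _ (fun p => \pi_(En R T m.+1) (iotaEp m p))
  (comp_cont (iotaEp_cont m) pi_continuous).
apply => a b /eqP /qpiP H; apply/eqP/qpiP; exact: En_code_iota.
Qed.

Lemma En_quot m : continuous (@En_act R T mul m.+1) ->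
  forall U, open (@GxCone_map R T @^-1` U) -> open U.
Proof.
move=> cE U oU.
apply: (@open_from_map _ _ _ (@En_code R T m.+1)
   (fun p : T * cone R T => @En_act R T mul m.+1 (iotaE m p.2, p.1)) (PS U)).
- exact: (comp_cont (pair_cont (comp_cont (@snd_cont T (cone R T)) (iotaE_cont m))
     (@fst_cont T (cone R T))) cE).
- exact: PS_open.
case=> h c /=.
rewrite /En_act qrepr En_code_act /iotaE qrepr.
case E: (repr c) => [g t].
have <- : cpi (g, t) = c by rewrite -E reprK.
exact: PS_iota.
Qed.

Definition iotaI (c : cone R T) : Einf R T :=
  \pi_(Einf R T) (existT (En_pres_fam R T) 1%N (iotaEp 0 (repr c))).

Lemma iotaI_cont : continuous iotaI.
Proof.
have := @repr_comp_continuous _ _ _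
  (fun p => \pi_(Einf R T) (existT (En_pres_fam R T) 1%N (iotaEp 0 p)))
  (comp_cont (comp_cont (iotaEp_cont 0) (@existT_continuous _ (En_pres_fam R T) 1%N))
     pi_continuous).
apply => a b /eqP /qpiP H; apply/eqP/qpiP; exact: En_code_iota.
Qed.

Lemma Einf_quot : continuous (@Einf_act R T mul) ->
  forall U, open (@GxCone_map R T @^-1` U) -> open U.
Proof.
move=> cE U oU.
apply: (@open_from_map _ _ _ (@Einf_code R T)
   (fun p : T * cone R T => @Einf_act R T mul (iotaI p.2, p.1)) (PS U)).
- exact: (comp_cont (pair_cont (comp_cont (@snd_cont T (cone R T)) iotaI_cont)
     (@fst_cont T (cone R T))) cE).
- by apply/sigT_openP => n; exact: PS_open.
case=> h c /=.
rewrite /Einf_act qrepr /Einf_code /= En_code_act.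
have Hr := qrepr (@Einf_code R T) (existT (En_pres_fam R T) 1%N (iotaEp 0 (repr c))).
rewrite /Einf_code /= in Hr; rewrite /iotaI Hr.
case E: (repr c) => [g t].
have <- : cpi (g, t) = c by rewrite -E reprK.
exact: PS_iota.
Qed.

End Main.

Theorem mainTheorem6 (R : realType) (T : topologicalType)
    (mul : T -> T -> T) (inv : T -> T) (e : T) :
  topological_group mul inv e ->
  hausdorff_space T ->
  (~ continuous (@cone_act R T mul) \/
   (exists U : set (T * cone R T),
       ~ (open U <-> open (@GxCone_map R T @^-1` U)))) ->
  ~ continuous (@join_act R T mul) /\
  (forall n : nat, (1 <= n)%N -> ~ continuous (@En_act R T mul n)) /\
  ~ continuous (@Einf_act R T mul).
Proof.
move=> hG _ hyp.
have HQ : ~ (forall U, open (@GxCone_map R T @^-1` U) -> open U).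
  move=> HQ; case: hyp => [hc|[U hU]].
    exact: hc (quot_cone_act hG HQ).
  apply: hU; split; last exact: HQ.
  by move=> oU; move/continuousP: (@GxCone_cont R T); apply.
split; first by move=> c; apply: HQ; exact: (join_quot hG c).

split; last by move=> c; apply: HQ; exact: (@Einf_quot R T mul inv e hG c).
move=> [//|m] _ c; apply: HQ; exact: (@En_quot R T mul inv e hG m c).
Qed.
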